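(* Let $G=(V,E,w)$ be a weighted digraph and $W=\sum_{e\in E}w(e)$. Then $\chi_w(G)\le 2\lfloor\sqrt{2W}\rfloor+1$.
   Context: A weighted digraph is $G=(V,E,w)$ with $w:E\to[0,1]$. A $k$-coloring is a map $c:V\to\{1,\dots,k\}$, and $c[v]$ denotes the set of vertices with color $c(v)$. For $S\subseteq V$, $d^-_S(v)=\sum_{u\in S,(u,v)\in E}w(u,v)$. A weighted improper $k$-coloring is a $k$-coloring with $d^-_{c[v]}(v)<1$ for every $v$; $\chi_w(G)$ is the minimum $k$ for which one exists. *)

(* Defs.v *)
From HB Require Import structures.
From mathcomp Require Import all_boot all_order all_algebra.
From mathcomp Require Import reals.
Set Implicit Arguments. Unset Strict Implicit. Unset Printing Implicit Defensive.
Import Order.TTheory GRing.Theory Num.Theory.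
Local Open Scope ring_scope.

Definition weighted_digraph (R : realType) (V : finType) (E : rel V)
  (w : V -> V -> R) : Prop :=
  irreflexive E /\ (forall u v, E u v -> 0 <= w u v <= 1).

Definition total_weight (R : realType) (V : finType) (E : rel V)
  (w : V -> V -> R) : R :=
  \sum_(u : V) \sum_(v : V | E u v) w u v.

Definition in_deg (R : realType) (V : finType) (E : rel V)
  (w : V -> V -> R) (S : {set V}) (v : V) : R :=
  \sum_(u in S | E u v) w u v.

Definition color_class (V : finType) (k : nat) (c : {ffun V -> 'I_k}) (v : V)
  : {set V} := [set u | c u == c v].

Definition weighted_improper (R : realType) (V : finType) (E : rel V)
  (w : V -> V -> R) (k : nat) (c : {ffun V -> 'I_k}) : bool :=
  [forall v, in_deg E w (color_class c v) v < 1].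

Definition w_colorable (R : realType) (V : finType) (E : rel V)
  (w : V -> V -> R) (k : nat) : bool :=
  [exists c : {ffun V -> 'I_k}, weighted_improper E w c].

(* chi_w(G): least k admitting a weighted improper k-colouring.  For a
   loop-free digraph, #|V| colours always suffice (proper colouring), so the
   minimum is attained in [0, #|V|]. *)
Definition chi_w (R : realType) (V : finType) (E : rel V)
  (w : V -> V -> R) : nat :=
  \big[minn/#|V|]_(k < #|V|.+1 | w_colorable E w k) (k : nat).

(* Main.v *)
Require Import Defs.
From HB Require Import structures.
From mathcomp Require Import all_boot all_order all_algebra.
From mathcomp Require Import reals.
From mathcomp Require Import zify.
Import Order.TTheory GRing.Theory Num.Theory.
Set Implicit Arguments. Unset Strict Implicit. Unset Printing Implicit Defensive.
Local Open Scope ring_scope.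

Section Proof.
Variables (R : realType) (V : finType) (E : rel V) (w : V -> V -> R).
Hypothesis Hirr : irreflexive E.
Hypothesis Hw : forall u v, E u v -> 0 <= w u v <= 1.

Definition w' x y : R := if E x y then w x y else 0.
Definition s v y := w' v y + w' y v.
Definition d v := \sum_y s v y.
Definition Phi k (c : {ffun V -> 'I_k}) :=
  \sum_x \sum_y ((c x == c y)%:R * w' x y).
Definition Mv k (c : {ffun V -> 'I_k}) v :=
  \sum_(y | y != v) ((c v == c y)%:R * s v y).
Definition upd k (c : {ffun V -> 'I_k}) v j : {ffun V -> 'I_k} :=
  [ffun x => if x == v then j else c x].

Lemma w'_ge0 x y : 0 <= w' x y.
Proof. rewrite /w'; case: ifP => // /Hw /andP[] //. Qed.

Lemma w'_vv v : w' v v = 0.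
Proof. by rewrite /w' Hirr. Qed.

Lemma s_ge0 x y : 0 <= s x y.
Proof. by rewrite /s addr_ge0 // w'_ge0. Qed.

Lemma d_ge0 x : 0 <= d x.
Proof. by rewrite /d sumr_ge0 // => y _; apply: s_ge0. Qed.

Lemma Phi_dec k (c : {ffun V -> 'I_k}) v :
  Phi c = \sum_(x | x != v) \sum_(y | y != v) ((c x == c y)%:R * w' x y)
          + Mv c v.
Proof.
rewrite /Phi (bigD1 v) //= (bigD1 v) //= w'_vv mulr0 add0r.
have -> : \sum_(x | x != v) \sum_y ((c x == c y)%:R * w' x y) =
   \sum_(x | x != v) ((c x == c v)%:R * w' x v
     + \sum_(y | y != v) ((c x == c y)%:R * w' x y)).
  by apply: eq_bigr => x _; rewrite (bigD1 v).
rewrite big_split /= /Mv /s.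
under [X in _ = _ + X]eq_bigr => y _ do rewrite mulrDr.
rewrite big_split /=.
have -> : \sum_(i | i != v) (c i == c v)%:R * w' i v =
   \sum_(i | i != v) (c v == c i)%:R * w' i v.
  by apply: eq_bigr => y _; rewrite eq_sym.
set a := \sum_(i | i != v) _ * w' v i.
set b := \sum_(i | i != v) _ * w' i v.
set e := \sum_(i | i != v) \sum_(y | y != v) _.
by rewrite addrA addrC.
Qed.

Lemma local_min k (c : {ffun V -> 'I_k}) v j :
  Phi c <= Phi (upd c v j) ->
  Mv c v <= \sum_(y | y != v) ((j == c y)%:R * s v y).
Proof.
rewrite (Phi_dec c v) (Phi_dec (upd c v j) v).
have -> : \sum_(x | x != v) \sum_(y | y != v)
     (((upd c v j) x == (upd c v j) y)%:R * w' x y) =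
   \sum_(x | x != v) \sum_(y | y != v) ((c x == c y)%:R * w' x y).
  apply: eq_bigr => x xv; apply: eq_bigr => y yv.
  by rewrite /upd !ffunE (negbTE xv) (negbTE yv).
rewrite lerD2l /Mv /upd ffunE eqxx.
by under [X in _ <= X -> _]eq_bigr => y yv do rewrite ffunE (negbTE yv).
Qed.


Lemma sum_d : \sum_v d v = 2 * total_weight E w.
Proof.
have HT : total_weight E w = \sum_u \sum_v w' u v.
  by rewrite /total_weight; apply: eq_bigr => u _; rewrite big_mkcond.
rewrite /d /s.
under eq_bigr => v _ do rewrite big_split.
rewrite big_split /= HT [X in _ + X = _]exchange_big /=.
by rewrite -[2]/(1+1) mulrDl mul1r.
Qed.

Lemma in_deg_le k (c : {ffun V -> 'I_k}) v :
  in_deg E w (color_class c v) v <= Mv c v.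
Proof.
rewrite /in_deg /Mv big_mkcond [X in _ <= X]big_mkcond /=.
apply: ler_sum => u _.
case: (eqVneq u v) => [->|uv]; first by rewrite Hirr andbF.
rewrite /color_class inE /s /= [c u == _]eq_sym.
case: (c v == c u) => /=; last by rewrite mul0r.
rewrite mul1r; case Euv: (E u v).
  by rewrite {2}/w' Euv lerDr w'_ge0.
by rewrite addr_ge0 // w'_ge0.
Qed.


Lemma colorable_n (n : nat) :
  2 * total_weight E w < (n.+1)%:R ^+ 2 -> w_colorable E w (n + n).+1.
Proof.
move=> HW.
pose H := [set v | (n.+1)%:R <= d v].
have HH : (#|H| <= n)%N.
  rewrite -ltnS -(ltr_nat R).
  have Hn : 0 < (n.+1)%:R :> R by rewrite ltr0n.
  rewrite -(ltr_pM2r Hn).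
  apply: (le_lt_trans _ (lt_le_trans HW _)); last by rewrite expr2.
  have -> : #|H|%:R * (n.+1)%:R = \sum_(v in H) (n.+1)%:R :> R.
    by rewrite sumr_const mulr_natl.
  rewrite -sum_d.
  apply: (le_trans (y := \sum_(v in H) d v)).
    by apply: ler_sum => v; rewrite inE.
  rewrite [X in _ <= X](bigID (mem H)) /= lerDl sumr_ge0 // => v _.
  exact: d_ge0.
pose k := (n + n).+1.
pose hcol (v : V) : 'I_k := inord (n.+1 + index v (enum H)).
have hcolE v : v \in H -> hcol v = (n.+1 + index v (enum H))%N :> nat.
  move=> vH; rewrite inordK // addSn ltnS ltn_add2l.
  by rewrite (leq_trans _ HH) // cardE index_mem mem_enum.
pose P := fun c : {ffun V -> 'I_k} =>
  [forall v, if v \in H then c v == hcol v else (c v < n.+1)%N].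
pose c0 : {ffun V -> 'I_k} := [ffun v => if v \in H then hcol v else ord0].
have Pc0 : P c0.
  by apply/forallP => v; rewrite ffunE; case: (v \in H).
case: (arg_minP (fun c => Phi c) Pc0) => c Pc Hmin.
apply/existsP; exists c; apply/forallP => v.
have Pcv u : if u \in H then c u == hcol u else (c u < n.+1)%N.
  by move/forallP: Pc.
case vH: (v \in H).
  have := Pcv v; rewrite vH => /eqP cv.
  rewrite /in_deg big1 ?ltr01 // => u /andP[]; rewrite /color_class inE => /eqP cuv Euv.
  exfalso.
  have uv : u = v.
    have := Pcv u; case uH: (u \in H).
      move/eqP => cu.
      have eqi : index u (enum H) = index v (enum H).
        apply/eqP; rewrite -(eqn_add2l n.+1).

        by rewrite -(hcolE u uH) -(hcolE v vH) -cu -cv cuv.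
      rewrite -(nth_index u (_ : u \in enum H)) ?mem_enum //.
      by rewrite eqi nth_index // mem_enum.
    by rewrite cuv cv hcolE // ltnNge leq_addr.
  by rewrite uv Hirr in Euv.
have dv : d v < (n.+1)%:R.
  by move: vH; rewrite /H inE => /negbT; rewrite -ltNge.
have Hn : 0 < (n.+1)%:R :> R by rewrite ltr0n.
have L : (n.+1 <= k)%N by rewrite /k ltnS leq_addr.
have key : \sum_(i < n.+1) Mv c v <=
    \sum_(i < n.+1) \sum_(y | y != v) ((widen_ord L i == c y)%:R * s v y).
  apply: ler_sum => i _; apply: local_min; apply: Hmin.
  apply/forallP => u; rewrite /upd ffunE; case: (eqVneq u v) => [->|uv].
    by rewrite vH /=; exact: ltn_ord i.
  exact: Pcv u.
rewrite sumr_const card_ord -mulr_natl in key.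
apply: (le_lt_trans (in_deg_le c v)).
rewrite -(ltr_pM2l Hn) mulr1; apply: (le_lt_trans key); apply: (le_lt_trans _ dv).
rewrite exchange_big /= /d [X in _ <= X](bigD1 v) //=.
have hs : \sum_(i | i != v) s v i <= s v v + \sum_(i | i != v) s v i.
  by rewrite lerDr s_ge0.
apply: (le_trans _ hs).
apply: ler_sum => y _; rewrite -mulr_suml.
have : \sum_(i < n.+1) ((widen_ord L i == c y)%:R : R) <= 1.
  case: (ltnP (c y) n.+1) => cy.
    rewrite (bigD1 (Ordinal cy)) //= big1 => [|i ine].
      by rewrite addr0 lern1 leq_b1.
    apply/eqP; rewrite pnatr_eq0 eqb0; apply/negP => /eqP h.
    by move/negP: ine; apply; apply/eqP/val_inj; rewrite /= -h.
  rewrite big1 // => i _; apply/eqP; rewrite pnatr_eq0 eqb0; apply/negP => /eqP h.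
  by move: cy; rewrite -h /= leqNgt ltn_ord.
by move=> h1; rewrite -[X in _ <= X]mul1r ler_wpM2r // s_ge0.
Qed.

End Proof.

Lemma chi_le_K (R : realType) (V : finType) (E : rel V) (w : V -> V -> R) K :
  w_colorable E w K -> (chi_w E w <= K)%N.
Proof.
move=> col; rewrite /chi_w.
case: (leqP K #|V|) => hk.
  have hk' : (K < #|V|.+1)%N by rewrite ltnS.
  suff : forall r, Ordinal hk' \in r ->
     (\big[minn/#|V|]_(i <- r | w_colorable E w i) (i : nat) <= K)%N.
    by apply; exact: mem_index_enum.
  elim => [|a r IH] //; rewrite inE big_cons => /orP[/eqP <-|/IH].
    by rewrite /= col geq_minl.
  by case: ifP => _ // h; rewrite geq_min h orbT.
apply: leq_trans (ltnW hk).
elim/big_ind: _ => //.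
  by move=> x y hx hy; rewrite geq_min hx.
by move=> i _; rewrite -ltnS ltn_ord.
Qed.

Lemma natK_le (m : nat) : (((m + m).+1)%:R <= 2 * m%:Z + 1 :> int).
Proof. lia. Qed.

Theorem theorem3p5 (R : realType) (V : finType) (E : rel V) (w : V -> V -> R) :
  weighted_digraph E w ->
  ((chi_w E w)%:R : int) <= 2 * Num.floor (Num.sqrt (2 * total_weight E w)) + 1.
Proof.
move=> [Hirr Hw].
set W := total_weight E w.
have W0 : 0 <= 2 * W.
  rewrite mulr_ge0 // /W /total_weight sumr_ge0 // => u _.
  by rewrite sumr_ge0 // => v /Hw /andP[].
set t := Num.floor (Num.sqrt (2 * W)).
have t0 : 0 <= t by rewrite /t floor_ge0 sqrtr_ge0.
have [n tn] : exists n : nat, t = n%:Z by exists `|t|%N; rewrite gez0_abs.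
have HW : 2 * W < (n.+1)%:R ^+ 2.
  have := floorD1_gt (Num.sqrt (2 * W)); rewrite -/t tn => h.
  have h' : Num.sqrt (2 * W) < (n.+1)%:R.
    by move: h; rewrite intrD -[1%:~R]/(1%:R) -natrD addn1.
  by rewrite -(sqr_sqrtr W0) !expr2 ltr_pM // ?sqrtr_ge0.
have col := colorable_n Hirr Hw HW.
have := chi_le_K col.
rewrite tn => h.
rewrite -(ler_nat int) in h; apply: (le_trans h); exact: natK_le.
Qed.
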